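(* Let $P$ be a poset and let $2\leq\alpha,\beta\leq\omega$. Then $P$ is $(\alpha,\beta)$-representable if and only if $P\models\psi_{rsn}$ for all $n\in\omega$, all $1\leq r<\alpha$ and all $1\leq s<\beta$.
   Context: A poset $P$ is $(\alpha,\beta)$-representable if there is a set $X$ and an order embedding $h:P\to\wp(X)$ ($\wp(X)$ ordered by inclusion) such that whenever $S\subseteq P$ with $|S|<\alpha$ and $\bigwedge S$ exists in $P$ then $h(\bigwedge S)=\bigcap h[S]$ (with $\bigcap\emptyset=X$), and whenever $T\subseteq P$ with $|T|<\beta$ and $\bigvee T$ exists in $P$ then $h(\bigvee T)=\bigcup h[T]$. The sentences: signature with one binary relation $\leq$; $\vec{x}_k=(x_1,\ldots,x_k)$. For $1\leq k<\omega$: $J_k(\vec{x}_k,y)$ holds under assignment $v$ iff $v(y)$ is the join of $\{v(x_1),\ldots,v(x_k)\}$, $M_k(\vec{x}_k,y)$ iff $v(y)$ is their meet; $C_k(\vec{x}_k,y)=\bigvee_{i=1}^k(y=x_i)$, $D_k=\neg C_k$; $C_{km}(\vec{x}_k,\vec{y}_m)$ holds iff $\{v(y_j)\}\subseteq\{v(x_i)\}$. Let $\sigma_k(\vec{x}_k,c)=\exists z(C_k(\vec{x}_k,z)\wedge z\leq c)$, $\tau_{kr}(\vec{x}_k,\vec{a}_r,c)=C_{kr}(\vec{x}_k,\vec{a}_r)\wedge M_r(\vec{a}_r,c)$, $\rho_{ks}(\vec{x}_k,\vec{b}_s)=\exists z(C_k(\vec{x}_k,z)\wedge J_s(\vec{b}_s,z))$.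 Define $\phi_{krs0}(\vec{x}_k,y)=D_k(\vec{x}_k,y)$ and $\phi_{krs(n+1)}(\vec{x}_k,y)=\forall\vec{a}_r\forall\vec{b}_s\forall c\Big(\big(\sigma_k(\vec{x}_k,c)\to\phi_{(k+1)rsn}(\vec{x}_k,c,y)\big)\wedge\big(\tau_{kr}(\vec{x}_k,\vec{a}_r,c)\to\phi_{(k+1)rsn}(\vec{x}_k,c,y)\big)\wedge\big(\rho_{ks}(\vec{x}_k,\vec{b}_s)\to\bigvee_{i=1}^s\phi_{(k+1)rsn}(\vec{x}_k,b_i,y)\big)\Big)$, and $\psi_{rsn}=\forall x\forall y(\neg(x\leq y)\to\phi_{1rsn}(x,y))$ for $1\leq r,s<\omega$, $n\in\omega$. *)

(* Defs.v *)
From Stdlib Require Import List Arith.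
Import ListNotations.

Section Poset.
Context {P : Type} (le : P -> P -> Prop).

Definition is_poset : Prop :=
  (forall x, le x x) /\
  (forall x y, le x y -> le y x -> x = y) /\
  (forall x y z, le x y -> le y z -> le x z).

Definition is_meet (S : P -> Prop) (m : P) : Prop :=
  (forall p, S p -> le m p) /\
  (forall z, (forall p, S p -> le z p) -> le z m).

Definition is_join (S : P -> Prop) (j : P) : Prop :=
  (forall p, S p -> le p j) /\
  (forall z, (forall p, S p -> le p z) -> le j z).
End Poset.

Inductive card : Type := Fin (n : nat) | Omega.

Definition nat_lt_card (k : nat) (a : card) : Prop :=
  match a with Fin n => k < n | Omega => True end.

Definition two_le_card (a : card) : Prop :=
  match a with Fin n => 2 <= n | Omega => True end.

Definition size_lt {P : Type} (S : P -> Prop) (a : card) : Prop :=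
  match a with
  | Fin n => exists l : list P, length l < n /\ forall x, S x -> In x l
  | Omega => exists l : list P, forall x, S x -> In x l
  end.

Definition representable {P : Type} (le : P -> P -> Prop) (alpha beta : card)
  : Prop :=
  exists (X : Type) (h : P -> X -> Prop),
    (forall p q, le p q <-> (forall x, h p x -> h q x)) /\
    (forall (S : P -> Prop) (m : P), size_lt S alpha -> is_meet le S m ->
        forall x, h m x <-> (forall p, S p -> h p x)) /\
    (forall (T : P -> Prop) (j : P), size_lt T beta -> is_join le T j ->
        forall x, h j x <-> (exists p, T p /\ h p x)).

(* Semantics of the formulas phi_{krsn}, with the tuple x_k given as a list
   xs (k = length xs). *)
Section Formulas.
Context {P : Type} (le : P -> P -> Prop).

(* sigma_k(xs, c) = exists z (C_k(xs,z) /\ z <= c) *)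
Definition sigma_f (xs : list P) (c : P) : Prop :=
  exists z, In z xs /\ le z c.

(* tau_kr(xs, as, c) = C_kr(xs, as) /\ M_r(as, c) *)
Definition tau_f (xs as_ : list P) (c : P) : Prop :=
  (forall a, In a as_ -> In a xs) /\ is_meet le (fun z => In z as_) c.

(* rho_ks(xs, bs) = exists z (C_k(xs,z) /\ J_s(bs,z)) *)
Definition rho_f (xs bs : list P) : Prop :=
  exists z, In z xs /\ is_join le (fun w => In w bs) z.

Fixpoint phi (r s n : nat) (xs : list P) (y : P) : Prop :=
  match n with
  | 0 => ~ In y xs
  | S n' =>
      forall (as_ bs : list P) (c : P), length as_ = r -> length bs = s ->
        (sigma_f xs c -> phi r s n' (xs ++ [c]) y) /\
        (tau_f xs as_ c -> phi r s n' (xs ++ [c]) y) /\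
        (rho_f xs bs -> exists b, In b bs /\ phi r s n' (xs ++ [b]) y)
  end.

Definition psi (r s n : nat) : Prop :=
  forall x y : P, ~ le x y -> phi r s n [x] y.
End Formulas.

(* Main.v *)
Require Import Defs.
From Stdlib Require Import List Arith Lia Classical.
From mathcomp Require classical_sets.
Import ListNotations.

Lemma zorn_plain (T : Type) (Q : (T -> Prop) -> Prop) :
  (forall F : (T -> Prop) -> Prop, (forall X, F X -> Q X) ->
     (forall X Y, F X -> F Y -> (forall t, X t -> Y t) \/ (forall t, Y t -> X t)) ->
     Q (fun a => exists2 X, F X & X a)) ->
  exists A, Q A /\ forall B, (forall t, A t -> B t) -> ~ (forall t, B t -> A t) -> ~ Q B.
Proof.
  intros H.
  destruct (@classical_sets.Zorn_bigcup T Q) as [A [HA HM]].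
  - intros F HF Ht. apply (H F HF Ht).
  - exists A; split; auto. intros B H1 H2. apply (HM B). split; auto.
Qed.

Lemma nlc_max a b c : nat_lt_card a c -> nat_lt_card b c -> nat_lt_card (max a b) c.
Proof. destruct c; simpl; auto; lia. Qed.
Lemma nlc_1 c : two_le_card c -> nat_lt_card 1 c.
Proof. destruct c; simpl; auto; lia. Qed.

Lemma pad_ex {P : Type} (l : list P) k : 1 <= length l -> length l <= k ->
  exists l', length l' = k /\ (forall z, In z l' <-> In z l).
Proof.
  destruct l as [|a l]; simpl; [lia|]. intros _ Hk.
  exists ((a :: l) ++ repeat a (k - S (length l))). split.
  - rewrite length_app, repeat_length; simpl; lia.
  - intros z; rewrite in_app_iff; split.
    + intros [H|H]; auto. apply repeat_spec in H; subst; left; auto.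
    + intros H; left; exact H.
Qed.

Lemma cfilter {P : Type} (Q : P -> Prop) (l : list P) :
  exists l', (forall z, In z l' <-> In z l /\ Q z) /\ length l' <= length l.
Proof.
  induction l as [|a l IH].
  - exists []; simpl; split; [tauto|lia].
  - destruct IH as [l' [H1 H2]]. destruct (classic (Q a)) as [Hq|Hq].
    + exists (a :: l'); simpl; split; [|lia]. intros z; split.
      * intros [<-|Hz]; [auto|]. apply H1 in Hz; tauto.
      * intros [[<-|Hz] Hz']; [left; auto| right; apply H1; auto].
    + exists l'; simpl; split; [|lia]. intros z; split.
      * intros Hz; apply H1 in Hz; tauto.
      * intros [[<-|Hz] Hz']; [tauto| apply H1; auto].
Qed.

Lemma enum_size {P : Type} (S : P -> Prop) c : size_lt S c ->
  exists l, (forall z, In z l <-> S z) /\ nat_lt_card (length l) c.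
Proof.
  destruct c as [n|]; simpl; intros [l Hl].
  - destruct Hl as [Hlen Hl]. destruct (cfilter S l) as [l' [H1 H2]].
    exists l'; split; [|lia]. intros z; rewrite H1; split; [tauto|]. intros; split; auto.
  - destruct (cfilter S l) as [l' [H1 H2]].
    exists l'; split; auto. intros z; rewrite H1; split; [tauto|]. intros; split; auto.
Qed.

Lemma size_lt_list {P : Type} (l : list P) c : nat_lt_card (length l) c -> size_lt (fun z => In z l) c.
Proof. destruct c; simpl; intros H; exists l; auto. Qed.

Section Main.
Context {P : Type} (le : P -> P -> Prop) (Hrefl : forall x, le x x).

Lemma is_meet_ext (S S' : P -> Prop) m : (forall z, S z <-> S' z) ->
  is_meet le S m -> is_meet le S' m.
Proof. unfold is_meet; intros He [H1 H2]; split; firstorder. Qed.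
Lemma is_join_ext (S S' : P -> Prop) m : (forall z, S z <-> S' z) ->
  is_join le S m -> is_join le S' m.
Proof. unfold is_join; intros He [H1 H2]; split; firstorder. Qed.

Lemma incl_snoc (xs ys : list P) (c : P) : incl xs ys -> incl (xs ++ [c]) (ys ++ [c]).
Proof. intros H z; rewrite !in_app_iff; firstorder. Qed.

Lemma phi_sub (y : P) : forall n r s xs ys, incl xs ys ->
  phi le r s n ys y -> phi le r s n xs y.
Proof.
  induction n; simpl; intros r s xs ys Hi H.
  - intro Hy; apply H, Hi, Hy.
  - intros as_ bs c Ha Hb. destruct (H as_ bs c Ha Hb) as [H1 [H2 H3]].
    split; [|split].
    + intros [z [Hz Hl]]. eapply IHn; [apply incl_snoc, Hi|]. apply H1; exists z; auto.
    + intros [Hin Hm]. eapply IHn; [apply incl_snoc, Hi|]. apply H2; split; auto.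
    + intros [z [Hz Hj]]. destruct H3 as [b [Hb1 Hb2]].
      { exists z; split; auto. }
      exists b; split; auto. eapply IHn; [apply incl_snoc, Hi|exact Hb2].
Qed.

Lemma phi_noty (y : P) : forall n r s xs, phi le r s n xs y -> ~ In y xs.
Proof.
  induction n; simpl; auto. intros r s xs H Hin.
  destruct (H (repeat y r) (repeat y s) y (repeat_length _ _) (repeat_length _ _)) as [H1 _].
  apply (IHn r s (xs ++ [y])).
  - apply H1; exists y; split; auto.
  - apply in_app_iff; right; left; auto.
Qed.

Lemma phi_mono (y : P) : forall n N r s R S xs, 1 <= r -> r <= R -> 1 <= s -> s <= S ->
  n <= N -> phi le R S N xs y -> phi le r s n xs y.
Proof.
  induction n; intros N r s R S xs H1 H2 H3 H4 H5 H.
  - simpl. eapply phi_noty; eauto.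
  - destruct N; [lia|]. simpl in *. intros as_ bs c Ha Hb.
    destruct (pad_ex as_ R) as [as' [Ha' Has]]; try lia.
    destruct (pad_ex bs S) as [bs' [Hb' Hbs]]; try lia.
    destruct (H as' bs' c Ha' Hb') as [G1 [G2 G3]]. split; [|split].
    + intro Hs; eapply (IHn N); [..|apply G1; auto]; lia.
    + intros [Hin Hm]; eapply (IHn N); [..|apply G2; split]; try lia.
      * intros a Ha0; apply Hin, Has, Ha0.
      * eapply is_meet_ext; [|exact Hm]. intro z; symmetry; apply Has.
    + intros [z [Hz Hj]]. destruct G3 as [b [Hb1 Hb2]].
      { exists z; split; auto. eapply is_join_ext; [|exact Hj]. intro z'; symmetry; apply Hbs. }
      exists b; split; [apply Hbs; auto|]. eapply (IHn N); [..|exact Hb2]; lia.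
Qed.

Variables (alpha beta : card) (Ha : two_le_card alpha) (Hb : two_le_card beta).

Definition inr (r s : nat) := 1 <= r /\ nat_lt_card r alpha /\ 1 <= s /\ nat_lt_card s beta.

Variable y : P.

Definition good (xs : list P) := forall r s n, inr r s -> phi le r s n xs y.

Lemma good_sub xs ys : incl xs ys -> good ys -> good xs.
Proof. intros Hi H r s n Hr. eapply phi_sub; eauto. Qed.

Lemma collect xs : forall L, (forall b, In b L -> exists r s n, inr r s /\ ~ phi le r s n (xs ++ [b]) y) ->
  exists R S N, inr R S /\ forall b, In b L -> ~ phi le R S N (xs ++ [b]) y.
Proof.
  induction L as [|a L IH]; intros H.
  - exists 1, 1, 0; split; [|intros b []]. unfold inr; split; [lia|split; [apply nlc_1; auto|split; [lia|apply nlc_1; auto]]].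
  - destruct (H a (or_introl eq_refl)) as [r [s [n [[Hr1 [Hr2 [Hs1 Hs2]]] Hn]]]].
    destruct IH as [R [S [N [[HR1 [HR2 [HS1 HS2]]] HN]]]].
    { intros b Hb'; apply H; right; auto. }
    exists (max r R), (max s S), (max n N). split.
    + unfold inr; split; [lia|split; [apply nlc_max; auto|split; [lia|apply nlc_max; auto]]].
    + intros b [<-|Hb']; intro Hp.
      * apply Hn; eapply phi_mono; [..|exact Hp]; lia.
      * apply (HN b Hb'); eapply phi_mono; [..|exact Hp]; lia.
Qed.

Lemma good_rho xs bs : good xs -> rho_f le xs bs -> 1 <= length bs ->
  nat_lt_card (length bs) beta -> exists b, In b bs /\ good (xs ++ [b]).
Proof.
  intros Hg Hr Hl1 Hl2. apply NNPP; intro Hno.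
  assert (Hf : forall b, In b bs -> exists r s n, inr r s /\ ~ phi le r s n (xs ++ [b]) y).
  { intros b Hb'. apply NNPP; intro H'. apply Hno. exists b; split; auto.
    intros r s n Hr'. apply NNPP; intro Hf. apply H'; exists r, s, n; auto. }
  destruct (collect xs bs Hf) as [R [S [N [[HR1 [HR2 [HS1 HS2]]] HN]]]].
  destruct (pad_ex bs (max S (length bs))) as [bs' [Hb' Hbs]]; try lia.
  assert (Hi : inr R (max S (length bs))).
  { unfold inr; split; [lia|split; auto; split; [lia|apply nlc_max; auto]]. }
  specialize (Hg R _ (Nat.succ N) Hi). simpl in Hg.
  destruct (Hg (repeat y R) bs' y (repeat_length _ _) Hb') as [_ [_ G3]].
  destruct G3 as [b [Hb1 Hb2]].
  { destruct Hr as [z [Hz Hj]]. exists z; split; auto. eapply is_join_ext; [|exact Hj]. intro z'; symmetry; apply Hbs. }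
  apply (HN b); [apply Hbs; auto|]. eapply phi_mono; [..|exact Hb2]; lia.
Qed.

Lemma good_move xs c : good xs ->
  (sigma_f le xs c \/ exists as_, 1 <= length as_ /\ nat_lt_card (length as_) alpha /\ tau_f le xs as_ c) ->
  good (xs ++ [c]).
Proof.
  intros Hg Hm r s n Hr. destruct Hm as [Hs | [as_ [H1 [H2 Ht]]]].
  - specialize (Hg r s (S n) Hr). simpl in Hg.
    destruct (Hg (repeat c r) (repeat c s) c) as [Hs' _]; try apply repeat_length. apply Hs', Hs.
  - destruct Hr as [Hr1 [Hr2 [Hs1 Hs2]]].
    destruct (pad_ex as_ (max r (length as_))) as [as' [Ha' Has]]; try lia.
    assert (Hi : inr (max r (length as_)) s).
    { unfold inr; split; [lia|split; [apply nlc_max; auto|split; auto]]. }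
    specialize (Hg _ s (S n) Hi). simpl in Hg.
    destruct (Hg as' (repeat c s) c Ha' (repeat_length _ _)) as [_ [G2 _]].
    eapply phi_mono; [..|apply G2]; try lia.
    destruct Ht as [Hin Hm]. split.
    + intros a Ha0; apply Hin, Has, Ha0.
    + eapply is_meet_ext; [|exact Hm]. intro z; symmetry; apply Has.
Qed.

Definition filt (F : P -> Prop) :=
  (forall z c, F z -> le z c -> F c) /\
  (forall S m, size_lt S alpha -> is_meet le S m -> (forall p, S p -> F p) -> F m) /\
  (forall T j, size_lt T beta -> is_join le T j -> F j -> exists p, T p /\ F p).

Variable x : P.
Hypothesis Hgx : good [x].

Definition FG (G : P -> Prop) := forall xs, (forall z, In z xs -> z = x \/ G z) -> good xs.

Lemma chain_list (F : (P -> Prop) -> Prop)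
  (Ht : forall X Y, F X -> F Y -> (forall t, X t -> Y t) \/ (forall t, Y t -> X t)) :
  forall xs, (forall z, In z xs -> z = x \/ exists2 X, F X & X z) ->
  (forall z, In z xs -> z = x) \/ exists X, F X /\ forall z, In z xs -> z = x \/ X z.
Proof.
  induction xs as [|a xs IH]; intros H.
  - left; intros z [].
  - destruct IH as [H1|[X [HX H1]]].
    { intros z Hz; apply H; right; auto. }
    + destruct (H a (or_introl eq_refl)) as [Ha'|[X HX HXa]].
      * left; intros z [<-|Hz]; auto.
      * right; exists X; split; auto. intros z [<-|Hz]; auto.
    + destruct (H a (or_introl eq_refl)) as [Ha'|[Y HY HYa]].
      * right; exists X; split; auto. intros z [<-|Hz]; auto.
      * destruct (Ht X Y HX HY) as [HXY|HYX].
        -- right; exists Y; split; auto. intros z [<-|Hz]; auto.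
           destruct (H1 z Hz); auto.
        -- right; exists X; split; auto. intros z [<-|Hz]; auto.
Qed.

Lemma exists_max : exists A, FG A /\ forall B, (forall t, A t -> B t) -> ~ (forall t, B t -> A t) -> ~ FG B.
Proof.
  apply zorn_plain. intros F HF Ht xs Hxs.
  destruct (chain_list F Ht xs Hxs) as [H1|[X [HX H1]]].
  - eapply good_sub; [|exact Hgx]. intros z Hz; rewrite (H1 z Hz); left; auto.
  - apply (HF X HX xs H1).
Qed.

Lemma separation : ~ le x y -> exists F, filt F /\ F x /\ ~ F y.
Proof.
  intros Hxy. destruct exists_max as [A [HA Amax]].
  set (M := fun z => z = x \/ A z).
  assert (goodM : forall xs, (forall z, In z xs -> M z) -> good xs) by exact HA.
  assert (addc : forall c, (forall xs, (forall z, In z xs -> M z) -> good (xs ++ [c])) -> M c).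
  { intros c H. apply NNPP; intro Hc. apply (Amax (fun z => A z \/ z = c)).
    - intros t Ht; left; auto.
    - intro H'. apply Hc. right. apply H'. right; auto.
    - intros xs Hxs. destruct (cfilter M xs) as [xs' [H1 _]].
      eapply good_sub; [|apply H].
      + intros z Hz. apply in_app_iff. destruct (Hxs z Hz) as [E|[E|E]].
        * left; apply H1; split; auto; left; auto.
        * left; apply H1; split; auto; right; auto.
        * right; left; auto.
      + intros z Hz; apply H1 in Hz; tauto. }
  assert (notyM : ~ M y).
  { intro Hy. assert (G := goodM [y]). 
    refine (G _ 1 1 0 _ _).
    - intros z [<-|[]]; auto.
    - unfold inr; split; [lia|split; [apply nlc_1; auto|split; [lia|apply nlc_1; auto]]].
    - left; auto. }
  assert (up : forall z c, M z -> le z c -> M c).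
  { intros z c Hz Hl. apply addc. intros xs Hxs.
    assert (G : good ((xs ++ [z]) ++ [c])).
    { apply good_move.
      - apply goodM. intros w; rewrite in_app_iff; intros [Hw|[<-|[]]]; auto.
      - left. exists z; split; auto. apply in_app_iff; right; left; auto. }
    eapply good_sub; [|exact G]. intros w; rewrite !in_app_iff; tauto. }
  exists M. split; [|split; [left; auto|exact notyM]].
  split; [exact up|split].
  - intros S m HS [Hm1 Hm2] HSM.
    destruct (enum_size S alpha HS) as [l [Hl Hll]].
    destruct l as [|a l'].
    + apply (up x); [left; auto|]. apply Hm2. intros p Sp; apply Hl in Sp; destruct Sp.
    + apply addc. intros xs Hxs.
      assert (G : good ((xs ++ (a :: l')) ++ [m])).
      { apply good_move.
        - apply goodM. intros w; rewrite in_app_iff; intros [Hw|Hw]; auto. apply HSM, Hl, Hw.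
        - right. exists (a :: l'). split; [simpl; lia|split; auto]. split.
          + intros w Hw; apply in_app_iff; right; auto.
          + eapply is_meet_ext; [|split; [exact Hm1|exact Hm2]]. intro z; symmetry; apply Hl. }
      eapply good_sub; [|exact G]. intros w; rewrite !in_app_iff; tauto.
  - intros T j HT [Hj1 Hj2] HjM.
    destruct (enum_size T beta HT) as [l [Hl Hll]].
    destruct l as [|a l'].
    + exfalso. apply notyM. apply (up j); auto. apply Hj2. intros p Tp; apply Hl in Tp; destruct Tp.
    + apply NNPP; intro Hno.
      assert (Hbb : forall b, In b (a :: l') -> exists Z, (forall z, In z Z -> M z) /\ ~ good (Z ++ [b])).
      { intros b Hb'. apply NNPP; intro H'. apply Hno; exists b; split; [apply Hl; auto|].
        apply addc; intros xs Hxs; apply NNPP; intro Hg; apply H'; exists xs; auto. }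
      assert (Hcol : forall L, (forall b, In b L -> exists Z, (forall z, In z Z -> M z) /\ ~ good (Z ++ [b])) ->
                exists Z, (forall z, In z Z -> M z) /\ forall b, In b L -> ~ good (Z ++ [b])).
      { induction L as [|c L IH]; intros H.
        - exists []; split; [intros z []|intros b []].
        - destruct (H c (or_introl eq_refl)) as [Zc [HZc1 HZc2]].
          destruct IH as [Z [HZ1 HZ2]]. { intros b Hb'; apply H; right; auto. }
          exists (Z ++ Zc). split.
          + intros z; rewrite in_app_iff; intros [Hz|Hz]; auto.
          + intros b [<-|Hb'] Hg.
            * apply HZc2. eapply good_sub; [|exact Hg]. intros w; rewrite !in_app_iff; tauto.
            * apply (HZ2 b Hb'). eapply good_sub; [|exact Hg]. intros w; rewrite !in_app_iff; tauto. }
      destruct (Hcol _ Hbb) as [Z [HZ1 HZ2]].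
      destruct (good_rho (Z ++ [j]) (a :: l')) as [b [Hb1 Hb2]].
      * apply goodM. intros w; rewrite in_app_iff; intros [Hw|[<-|[]]]; auto.
      * exists j; split; [apply in_app_iff; right; left; auto|].
        eapply is_join_ext; [|split; [exact Hj1|exact Hj2]]. intro z; symmetry; apply Hl.
      * simpl; lia.
      * exact Hll.
      * apply (HZ2 b Hb1). eapply good_sub; [|exact Hb2]. intros w; rewrite !in_app_iff; tauto.
Qed.

End Main.

Theorem theorem5p6 (P : Type) (le : P -> P -> Prop) (HP : is_poset le)
  (alpha beta : card) (Ha : two_le_card alpha) (Hb : two_le_card beta) :
  representable le alpha beta <->
  (forall (n r s : nat), 1 <= r -> nat_lt_card r alpha ->
     1 <= s -> nat_lt_card s beta -> psi le r s n).
Proof.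
  destruct HP as [Hrefl _]. split.
  - intros [X [h [Hord [Hmeet Hjoin]]]] n r s Hr1 Hr Hs1 Hs x y Hxy.
    assert (Hu : exists u, h x u /\ ~ h y u).
    { apply NNPP; intro H. apply Hxy, Hord. intros u Hu. apply NNPP; intro H'. apply H; exists u; auto. }
    destruct Hu as [u [Hxu Hyu]].
    assert (Main : forall n xs, (forall z, In z xs -> h z u) -> phi le r s n xs y).
    { induction n0 as [|n0 IH]; simpl; intros xs H.
      - intro Hin; apply Hyu, H, Hin.
      - intros as_ bs c Ha' Hb'. split; [|split].
        + intros [z [Hz Hl]]. apply IH. intros w; rewrite in_app_iff; intros [Hw|[<-|[]]]; auto.
          apply (proj1 (Hord z c) Hl); auto.
        + intros [Hin Hm]. apply IH. intros w; rewrite in_app_iff; intros [Hw|[<-|[]]]; auto.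
          apply (proj2 (Hmeet _ c (size_lt_list as_ alpha (ltac:(rewrite Ha'; exact Hr))) Hm u)).
          intros p Hp; apply H, Hin, Hp.
        + intros [z [Hz Hj]].
          destruct (proj1 (Hjoin _ z (size_lt_list bs beta (ltac:(rewrite Hb'; exact Hs))) Hj u) (H z Hz)) as [b [Hb1 Hb2]].
          exists b; split; auto. apply IH. intros w; rewrite in_app_iff; intros [Hw|[<-|[]]]; auto. }
    apply Main. intros z [<-|[]]; auto.
  - intros Hpsi.
    exists {F : P -> Prop | filt le alpha beta F}, (fun p F => proj1_sig F p).
    split; [|split].
    + intros p q; split.
      * intros Hpq [F HF] Hp; cbn in Hp |- *; destruct HF as [Hup _]. exact (Hup p q Hp Hpq).
      * intros H. apply NNPP; intro Hn.
        assert (Hg : good le alpha beta q [p]).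
        { intros r s n [H1 [H2 [H3 H4]]]. exact (Hpsi n r s H1 H2 H3 H4 p q Hn). }
        destruct (separation le Hrefl alpha beta Ha Hb q p Hg Hn) as [F [HF [Hp Hq]]].
        apply Hq, (H (exist _ F HF)), Hp.
    + intros S m HS HM [F0 HF]; cbn; destruct HF as [Hup [Hmt _]]. split.
      * intros Hm p Sp. eapply Hup; [exact Hm|apply (proj1 HM), Sp].
      * intros H. exact (Hmt S m HS HM H).
    + intros T j HT HJ [FF HF]; cbn; destruct HF as [Hup [_ Hpr]]. split.
      * intros Hj. exact (Hpr T j HT HJ Hj).
      * intros [p [Tp Fp]]. eapply Hup; [exact Fp|apply (proj1 HJ), Tp].
Qed.
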